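(* Let $\alpha>1$, let $X=\{x_j:j\in J\}\subset\mathbb{R}^2$ be finite, and let $s'\in\mathbb{R}^2$. Then $s'$ is the minimiser of $s\mapsto P_2(s,X(s'))$ if and only if $s'=s_\alpha^*$.
   Context: For $\beta>1$ and a finite indexed family $Y=(y_j)_{j\in J}$, $P_\beta(s,Y)=\sum_{j\in J}\|s-y_j\|^\beta+\max_{j\in J}\|s-y_j\|^\beta$; $s_\alpha^*$ is the unique minimiser of $P_\alpha(\cdot,X)$. For a point $s$, $x_j(s)=s+\|s-x_j\|^{\alpha-2}(x_j-s)$ (with $x_j(s)=s$ when $s=x_j$), so that $\|x_j(s)-s\|=\|x_j-s\|^{\alpha-1}$, and $X(s)=(x_j(s))_{j\in J}$. *)

(* Defs.v *)
(* points of R^2 are row vectors 'rV[R]_2 over a realType R,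
   with the Euclidean norm; real powers via powR (0 `^ b = 0 for b <> 0). *)
From HB Require Import structures.
From mathcomp Require Import all_boot all_order all_algebra.
From mathcomp Require Import all_classical all_reals all_analysis.
Set Implicit Arguments. Unset Strict Implicit. Unset Printing Implicit Defensive.
Import Order.TTheory GRing.Theory Num.Theory.
Local Open Scope ring_scope.

Definition enorm {R : realType} (v : 'rV[R]_2) : R :=
  Num.sqrt (\sum_(i < 2) v ord0 i ^+ 2).

Definition Pbeta {R : realType} {J : finType} (beta : R) (s : 'rV[R]_2)
    (y : J -> 'rV[R]_2) : R :=
  \sum_(j : J) powR (enorm (s - y j)) beta
  + \big[Num.max/0]_(j : J) powR (enorm (s - y j)) beta.

Definition Xs {R : realType} {J : finType} (alpha : R) (x : J -> 'rV[R]_2)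
    (s : 'rV[R]_2) : J -> 'rV[R]_2 :=
  fun j => if s == x j then s
           else s + powR (enorm (s - x j)) (alpha - 2) *: (x j - s).

(* Main.v *)
Require Import Defs.
From HB Require Import structures.
From mathcomp Require Import all_boot all_order all_algebra.
From mathcomp Require Import all_classical all_reals all_analysis.
From mathcomp Require Import ring lra.
Import Order.TTheory GRing.Theory Num.Theory.
Import numFieldNormedType.Exports.
Local Open Scope classical_set_scope.
Local Open Scope ring_scope.

Section Aux.
Context {R : realType}.
Implicit Types p q d : 'rV[R]_2.

Definition i1 : 'I_2 := ord_max.
Definition dot p q : R := p ord0 ord0 * q ord0 ord0 + p ord0 i1 * q ord0 i1.

Lemma sum2 (f : 'I_2 -> R) : \sum_(i < 2) f i = f ord0 + f i1.
Proof. by rewrite !big_ord_recl big_ord0 addr0; congr (_ + f _); apply/val_inj. Qed.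

Lemma enormE p : enorm p = Num.sqrt (dot p p).
Proof. by rewrite /enorm sum2 /dot !expr2. Qed.

Lemma dot_ge0 p : 0 <= dot p p.
Proof. by rewrite /dot addr_ge0 // -expr2 sqr_ge0. Qed.

Lemma enorm_ge0 p : 0 <= enorm p.
Proof. by rewrite enormE sqrtr_ge0. Qed.

Lemma enorm_sq p : enorm p ^+ 2 = dot p p.
Proof. by rewrite enormE sqr_sqrtr // dot_ge0. Qed.

Lemma dotC p q : dot p q = dot q p.
Proof. by rewrite /dot mulrC [p _ i1 * _]mulrC. Qed.

Lemma dotDl p q d : dot (p + q) d = dot p d + dot q d.
Proof. rewrite /dot !mxE; ring. Qed.

Lemma dotBl p q d : dot (p - q) d = dot p d - dot q d.
Proof. rewrite /dot !mxE; ring. Qed.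

Lemma dotZl (c : R) p d : dot (c *: p) d = c * dot p d.
Proof. rewrite /dot !mxE; ring. Qed.

Lemma dotBr p q d : dot d (p - q) = dot d p - dot d q.
Proof. by rewrite dotC dotBl !(dotC d). Qed.

Lemma dot0l d : dot 0 d = 0.
Proof. rewrite /dot !mxE; ring. Qed.

Lemma CS p q : dot p q <= enorm p * enorm q.
Proof.
have [hn|hp] := lerP (dot p q) 0.
  by apply: le_trans hn _; rewrite mulr_ge0 // enorm_ge0.
rewrite !enormE -sqrtrM ?dot_ge0 //.
rewrite -(ger0_norm (ltW hp)) -sqrtr_sqr ler_sqrt; last by rewrite mulr_ge0 // dot_ge0.
rewrite /dot.
have := sqr_ge0 (p ord0 ord0 * q ord0 i1 - p ord0 i1 * q ord0 ord0).
rewrite !expr2; nra.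
Qed.

Lemma enormZ (c : R) p : enorm (c *: p) = `|c| * enorm p.
Proof.
rewrite !enormE dotZl (dotC p) dotZl mulrA -expr2 sqrtrM ?sqr_ge0 //.
by rewrite sqrtr_sqr.
Qed.

Lemma enorm0_eq p : enorm p = 0 -> p = 0.
Proof.
move=> /eqP; rewrite enormE sqrtr_eq0 /dot => h.
have h0 : p ord0 ord0 = 0 by apply/eqP; rewrite -sqrf_eq0 expr2; apply/eqP; nra.
have h1 : p ord0 i1 = 0 by apply/eqP; rewrite -sqrf_eq0 expr2; apply/eqP; nra.
apply/rowP => i; rewrite mxE.
case: i => [[|[|k]] hk] //.
  by rewrite -h0; congr (p _ _); apply/val_inj.
by rewrite -h1; congr (p _ _); apply/val_inj.
Qed.

Lemma tangent_scalar (b a c : R) : 1 < b -> 0 <= a -> 0 <= c ->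
  a `^ b + b * a `^ (b - 1) * (c - a) <= c `^ b.
Proof.
move=> b1 a0 c0.
have b0 : 0 < b by apply: lt_trans b1.
have bm0 : 0 < b - 1 by rewrite subr_gt0.
pose p := b / (b - 1).
have p0 : 0 < p by rewrite divr_gt0.
have pq : p^-1 + b^-1 = 1.
  by rewrite /p invf_div mulrBl mulfV ?gt_eqF // mul1r subrK.
have := conjugate_powR (powR_ge0 a (b - 1)) c0 p0 b0 pq.
rewrite -powRrM.
have -> : (b - 1) * p = b by rewrite /p mulrC divfK // gt_eqF.
move=> Y.
have e : b * a `^ (b - 1) * (c - a) = b * (a `^ (b - 1) * c) - b * a `^ b.
  by rewrite -(mulr_powRB1 a0 b0); ring.
rewrite e.
have Z : b * (a `^ (b - 1) * c) <= b * (a `^ b / p + c `^ b / b) by rewrite ler_pM2l.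
have W : b * (a `^ b / p + c `^ b / b) = (b - 1) * a `^ b + c `^ b.
  by rewrite /p; field; rewrite (gt_eqF b0) (gt_eqF bm0).
lra.
Qed.

Definition G (b : R) p := (enorm p `^ (b - 2)) *: p.

Lemma enormG b p : 1 < b -> enorm (G b p) = enorm p `^ (b - 1).
Proof.
move=> b1; rewrite /G enormZ ger0_norm ?powR_ge0 // mulrC.
have -> : b - 2 = (b - 1) - 1 by ring.
by rewrite mulr_powRB1 ?enorm_ge0 // subr_gt0.
Qed.

Lemma tangent_vec b p q : 1 < b ->
  enorm p `^ b + b * dot (G b p) (q - p) <= enorm q `^ b.
Proof.
move=> b1.
have b0 : 0 < b by apply: lt_trans b1.
set a := enorm p; set c := enorm q.
have a0 : 0 <= a := enorm_ge0 p.
have T := tangent_scalar b a c b1 a0 (enorm_ge0 q).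
suff H : b * dot (G b p) (q - p) <= b * a `^ (b - 1) * (c - a).
  rewrite -/c in T; lra.
rewrite -mulrA ler_pM2l //.
rewrite /G dotZl dotBr.
have -> : dot p p = a * a by rewrite -expr2 enorm_sq.
have hcs : dot p q <= a * c := CS p q.
have -> : a `^ (b - 1) = a `^ (b - 2) * a.
  have -> : b - 2 = (b - 1) - 1 by ring.
  by rewrite mulrC mulr_powRB1 // subr_gt0.
have := powR_ge0 a (b - 2).
set z := a `^ (b - 2) => z0.
rewrite -mulrA ler_wpM2l //; nra.
Qed.

Lemma powR_cont (r z : R) : 0 < z -> {for z, continuous (fun y : R => y `^ r)}.
Proof.
move=> z0; apply: differentiable_continuous.
apply/derivable1_diffP.
have H := is_derive1_powR r z0.
exact: ex_derive.
Qed.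

Lemma enorm_line v d (t : R) :
  enorm (v + t *: d) = Num.sqrt (dot v v + t * (2 * dot v d + t * dot d d)).
Proof.
rewrite enormE; congr Num.sqrt.
rewrite /dot !mxE; ring.
Qed.

Lemma dot_line v d (t : R) : dot (v + t *: d) d = dot v d + t * dot d d.
Proof. by rewrite dotDl dotZl. Qed.

Lemma poly_cvg (A B C : R) :
  (A + t * (B + t * C)) @[t --> (0:R)] --> A.
Proof.
suff h : (A + t * (B + t * C)) @[t --> (0:R)] --> A + 0 * (B + 0 * C).
  by rewrite !mul0r addr0 in h.
apply: cvgD; first exact: cvg_cst.
apply: cvgM; first exact: cvg_id.
apply: cvgD; first exact: cvg_cst.
by apply: cvgM; [exact: cvg_id | exact: cvg_cst].
Qed.

Lemma dot0r d : dot d 0 = 0.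
Proof. rewrite /dot !mxE; ring. Qed.

Lemma phi_cont_pos b v d : 0 < enorm v ->
  (dot (G b (v + t *: d)) d) @[t --> (0:R)] --> dot (G b v) d.
Proof.
move=> vpos.
have E : forall t, dot (G b (v + t *: d)) d
    = (enorm (v + t *: d)) `^ (b - 2) * (dot v d + t * dot d d).
  by move=> t; rewrite /G dotZl dot_line.
under eq_cvg do rewrite E.
have -> : dot (G b v) d = enorm v `^ (b - 2) * (dot v d + 0 * dot d d).
  by rewrite /G dotZl mul0r addr0.
apply: cvgM.
- apply: (cvg_comp (fun t => enorm (v + t *: d)) (fun y => y `^ (b - 2)) (G := nbhs (enorm v))).
  + rewrite (_ : (fun t => enorm (v + t *: d)) = (fun t => Num.sqrt (dot v v + t * (2 * dot v d + t * dot d d)))); last first.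
      by apply/funext => t; rewrite enorm_line.
    rewrite enormE.
    apply: (cvg_comp _ Num.sqrt (poly_cvg _ _ _)).
    exact: sqrt_continuous.
  + exact: powR_cont.
- apply: cvgD; first exact: cvg_cst.
  by apply: cvgM; [exact: cvg_id | exact: cvg_cst].
Qed.

Lemma phi_cvg0 b d : 1 < b ->
  (dot (G b (0 + t *: d)) d) @[t --> (0:R)^'+] --> 0.
Proof.
move=> b1.
have bm0 : 0 < b - 1 by rewrite subr_gt0.
have [d0|dn0] := eqVneq (enorm d) 0.
  rewrite (enorm0_eq d d0).
  under eq_cvg do rewrite dot0r.
  exact: cvg_cst.
set n := enorm d.
have npos : 0 < n by rewrite lt_neqAle eq_sym dn0 enorm_ge0.
apply/cvgrPdist_lt => e e0.
set c := (e / n) `^ (b - 1)^-1.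
have c0 : 0 < c by apply: powR_gt0; rewrite divr_gt0.
near=> t.
have t0 : 0 < t by near: t; exact: nbhs_right_gt.
have tc : t < c / n by near: t; apply: nbhs_right_lt; rewrite divr_gt0.
rewrite sub0r normrN.
have tn0 : 0 <= t * n by rewrite mulr_ge0 // ltW.
have E : dot (G b (0 + t *: d)) d = n * (t * n) `^ (b - 1).
  rewrite add0r /G enormZ ger0_norm ?ltW // dotZl dotZl -/n.
  have -> : dot d d = n * n by rewrite -expr2 enorm_sq.
  rewrite -(mulr_powRB1 tn0 bm0).
  have -> : b - 1 - 1 = b - 2 by ring.
  ring.
rewrite E ger0_norm; last by apply: mulr_ge0; [exact: ltW | exact: powR_ge0].
have tnc : t * n < c by rewrite -ltr_pdivlMr.
have : (t * n) `^ (b - 1) < c `^ (b - 1).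
  by apply: (gt0_ltr_powR bm0) => //; rewrite nnegrE // ltW.
rewrite /c -powRrM mulVf ?gt_eqF // powRr1; last by rewrite divr_ge0 // ltW.
move=> h.
have : n * (t * n) `^ (b - 1) < n * (e / n) by rewrite ltr_pM2l.
by rewrite mulrCA divff ?gt_eqF // mulr1.
Unshelve. all: end_near.
Qed.

End Aux.

Section Aux2.
Context {R : realType}.
Implicit Types p q d : 'rV[R]_2.

Lemma phi_cvg b v d : 1 < b ->
  (dot (G b (v + t *: d)) d) @[t --> (0:R)^'+] --> dot (G b v) d.
Proof.
move=> b1.
have [v0|vn0] := eqVneq (enorm v) 0.
  rewrite (enorm0_eq v v0).
  have -> : dot (G b 0) d = 0 by rewrite /G scaler0 dot0l.
  exact: phi_cvg0.
apply: cvg_at_right_filter; apply: phi_cont_pos.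
by rewrite lt_neqAle eq_sym vn0 enorm_ge0.
Qed.

Lemma cvg_sumJ {J : finType} (f : J -> R -> R) (l : J -> R) (F : set_system R)
  {FF : Filter F} :
  (forall j, f j t @[t --> F] --> l j) -> (\sum_j f j t) @[t --> F] --> \sum_j l j.
Proof.
move=> H; apply: cvg_big => //.
exact: add_continuous.
Qed.

Lemma bigmax_at {J : finType} (F : J -> R) j : (forall k, F k <= F j) -> 0 <= F j ->
  \big[Num.max/0]_k F k = F j.
Proof.
move=> H h0; apply/le_anti/andP; split; last exact: le_bigmax.
by apply: bigmax_le => // k _; exact: H.
Qed.

End Aux2.

Section Aux3.
Context {R : realType}.
Implicit Types p q d : 'rV[R]_2.

Definition Cond {J : finType} (b : R) (y : J -> 'rV[R]_2) (s : 'rV[R]_2) :=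
  forall d, exists j, (forall k, enorm (s - y k) `^ b <= enorm (s - y j) `^ b) /\
    0 <= \sum_k dot (G b (s - y k)) d + dot (G b (s - y j)) d.

Lemma suff_min {J : finType} b (y : J -> 'rV[R]_2) s : 1 < b -> Cond b y s ->
  forall s2, Pbeta b s y <= Pbeta b s2 y.
Proof.
move=> b1 C s2.
have b0 : 0 < b by apply: lt_trans b1.
have [j [jm hj]] := C (s2 - s).
have T : forall k, enorm (s - y k) `^ b + b * dot (G b (s - y k)) (s2 - s)
    <= enorm (s2 - y k) `^ b.
  move=> k; have := tangent_vec b (s - y k) (s2 - y k) b1.
  by rewrite (_ : s2 - y k - (s - y k) = s2 - s) // opprB addrA subrK.
rewrite /Pbeta (bigmax_at (fun k => enorm (s - y k) `^ b) j jm (powR_ge0 _ _)).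
have S1 : \sum_k enorm (s - y k) `^ b + b * \sum_k dot (G b (s - y k)) (s2 - s)
    <= \sum_k enorm (s2 - y k) `^ b.
  rewrite mulr_sumr -big_split /=; apply: ler_sum => k _; exact: T.
have S2 : enorm (s2 - y j) `^ b <= \big[Num.max/0]_k enorm (s2 - y k) `^ b.
  exact: le_bigmax.
have Tj := T j.
have : 0 <= b * (\sum_k dot (G b (s - y k)) (s2 - s) + dot (G b (s - y j)) (s2 - s)).
  by rewrite mulr_ge0 // ltW.
rewrite mulrDr.
lra.
Qed.

Lemma dotNZr (c : R) p d : dot p (- (c *: d)) = - (c * dot p d).
Proof. rewrite /dot !mxE; ring. Qed.

Lemma nec_min {J : finType} b (y : J -> 'rV[R]_2) s (j0 : J) : 1 < b ->
  (forall s2, Pbeta b s y <= Pbeta b s2 y) -> Cond b y s.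
Proof.
move=> b1 smin d.
have b0 : 0 < b by apply: lt_trans b1.
pose h := fun k => enorm (s - y k) `^ b.
pose phi := fun k (t : R) => dot (G b ((s - y k) + t *: d)) d.
pose phi0 := fun k => dot (G b (s - y k)) d.
pose S := \sum_k phi0 k.
pose M := \big[Num.max/0]_k h k.
apply: contrapT => Hn.
have H : forall j, (forall k, h k <= h j) -> S + phi0 j < 0.
  move=> j jm; rewrite ltNge; apply/negP => hS; apply: Hn; exists j; split => //.
have hM : forall k, h k <= M by move=> k; exact: le_bigmax.
have Phi : forall k, phi k t @[t --> (0:R)^'+] --> phi0 k.
  by move=> k; exact: phi_cvg.
have Psi : forall k, (phi k t + \sum_l phi l t) @[t --> (0:R)^'+] --> phi0 k + S.
  by move=> k; apply: cvgD; [exact: Phi | exact: cvg_sumJ].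
have tb : (t * b) @[t --> (0:R)^'+] --> 0 * b.
  by apply: cvg_at_right_filter; apply: cvgM; [exact: cvg_id | exact: cvg_cst].
have N1 : \forall t \near (0:R)^'+, forall k,
    h k + t * b * (phi k t + \sum_l phi l t) < M.
  apply: filter_forall => k.
  have [km|] := pselect (forall l, h l <= h k).
    have hkM : h k = M by rewrite /M (bigmax_at h k km) // powR_ge0.
    have Hk : phi0 k + S < 0 by rewrite addrC; exact: H k km.
    have neg := cvgr_lt _ (Psi k) _ Hk.
    near=> t.
    have t0 : 0 < t by near: t; exact: nbhs_right_gt.
    have ng : phi k t + \sum_l phi l t < 0 by near: t; exact: neg.
    rewrite hkM; have : 0 < t * b by rewrite mulr_gt0.
    by nra.
  move=> /existsNP [l /negP]; rewrite -ltNge => hl.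
  have hkM : h k < M by apply: lt_le_trans hl (hM l).
  have C : (h k + t * b * (phi k t + \sum_l phi l t)) @[t --> (0:R)^'+]
      --> h k + 0 * b * (phi0 k + S).
    by apply: cvgD; [exact: cvg_cst | apply: cvgM; [exact: tb | exact: Psi]].
  rewrite !mul0r addr0 in C.
  exact: cvgr_lt _ C _ hkM.
have : \forall t \near (0:R)^'+, 0 < t /\ forall k,
    h k + t * b * (phi k t + \sum_l phi l t) < M.
  near=> t; split; first by near: t; exact: nbhs_right_gt.
  by near: t; exact: N1.
move=> /filter_ex [t [t0 Ft]].
pose e := fun k => enorm (s + t *: d - y k) `^ b.
have eE : forall k, s + t *: d - y k = (s - y k) + t *: d.
  by move=> k; rewrite addrAC.
have ek : forall k, e k <= h k + b * t * phi k t.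
  move=> k; have := tangent_vec b ((s - y k) + t *: d) (s - y k) b1.
  rewrite (_ : s - y k - (s - y k + t *: d) = - (t *: d)); last first.
    by rewrite opprD addrA subrr add0r.
  rewrite dotNZr /e eE /h /phi; lra.
have Se : \sum_k e k <= \sum_k h k + b * t * \sum_k phi k t.
  rewrite mulr_sumr -big_split /=; apply: ler_sum => k _; exact: ek.
have Me : \big[Num.max/0]_k e k < M - t * b * \sum_k phi k t.
  have lt_all : forall k, e k < M - t * b * \sum_k phi k t.
    move=> k; have := ek k; have := Ft k; lra.
  apply: bigmax_lt; last by move=> k _; exact: lt_all.
  have := lt_all j0; have : 0 <= e j0 by exact: powR_ge0.
  lra.
have := smin (s + t *: d).
rewrite /Pbeta -/M.
change (\sum_k h k + M <= \sum_k e k + \big[Num.max/0]_k e k -> False).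
move=> hh.
have : b * t * \sum_k phi k t = t * b * \sum_k phi k t by ring.
lra.
Unshelve. all: end_near.
Qed.

End Aux3.

Section Aux4.
Context {R : realType}.
Implicit Types p q d : 'rV[R]_2.

Lemma Xs_G {J : finType} (a : R) (x : J -> 'rV[R]_2) s k :
  s - Xs a x s k = G a (s - x k).
Proof.
rewrite /Xs; case: ifP => [/eqP <-|_].
  by rewrite subrr /G scaler0.
by rewrite opprD addrA subrr add0r -scalerN opprB.
Qed.

Lemma G2 p : G 2 p = p.
Proof. by rewrite /G subrr powRr0 scale1r. Qed.

Lemma powR_le_mono (r u w : R) : 0 < r -> 0 <= u -> 0 <= w ->
  (u `^ r <= w `^ r) = (u <= w).
Proof.
move=> r0 u0 w0; apply/idP/idP; last first.
  by move=> uw; apply: (ge0_ler_powR (ltW r0)) => //; rewrite nnegrE.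
apply: contraTT; rewrite -!ltNge => wu.
by apply: (gt0_ltr_powR r0) => //; rewrite nnegrE.
Qed.

Lemma Cond_equiv {J : finType} (a : R) (x : J -> 'rV[R]_2) s : 1 < a ->
  Cond a x s <-> Cond 2 (Xs a x s) s.
Proof.
move=> a1.
have a0 : 0 < a by apply: lt_trans a1.
have am0 : 0 < a - 1 by rewrite subr_gt0.
have ord : forall k j, (enorm (s - Xs a x s k) `^ 2 <= enorm (s - Xs a x s j) `^ 2)
    = (enorm (s - x k) `^ a <= enorm (s - x j) `^ a).
  move=> k j; rewrite !Xs_G !enormG //.
  rewrite powR_le_mono ?powR_ge0 // powR_le_mono ?enorm_ge0 //.
  by rewrite powR_le_mono ?enorm_ge0.
have dd : forall k d, dot (G 2 (s - Xs a x s k)) d = dot (G a (s - x k)) d.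
  by move=> k d; rewrite G2 Xs_G.
split => C d; have [j [jm hj]] := C d; exists j; split.
- by move=> k; rewrite ord.
- by rewrite dd; under eq_bigr do rewrite dd.
- by move=> k; rewrite -ord.
- by move: hj; rewrite dd; under eq_bigr do rewrite dd.
Qed.

End Aux4.

Theorem lemma10 (R : realType) (J : finType) (alpha : R)
    (x : J -> 'rV[R]_2) (sstar s' : 'rV[R]_2) :
  1 < alpha ->
  (* sstar is the unique minimiser s_alpha^* of P_alpha(., X) *)
  (forall s, Pbeta alpha sstar x <= Pbeta alpha s x) ->
  (forall t, (forall s, Pbeta alpha t x <= Pbeta alpha s x) -> t = sstar) ->
  ((forall s, Pbeta 2 s' (Xs alpha x s') <= Pbeta 2 s (Xs alpha x s'))
   <-> s' = sstar).
Proof.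
move=> a1 smin suniq.
have [j0 _|J0] := pickP (fun _ : J => true); last first.
  exfalso.
  have P0 : forall s, Pbeta alpha s x = 0.
    by move=> s; rewrite /Pbeta !big_pred0 // addr0.
  have e0 : (0 : 'rV[R]_2) = sstar by apply: suniq => s; rewrite !P0.
  have e1 : (const_mx 1 : 'rV[R]_2) = sstar by apply: suniq => s; rewrite !P0.
  have : (const_mx 1 : 'rV[R]_2) ord0 ord0 = (0 : 'rV[R]_2) ord0 ord0 by rewrite e0 e1.
  by rewrite !mxE; apply/eqP; rewrite oner_eq0.
have r12 : (1 : R) < 2 by rewrite ltr1n.
split.
- move=> gmin.
  have C2 := nec_min 2 (Xs alpha x s') s' j0 r12 gmin.
  have Ca := (Cond_equiv alpha x s' a1).2 C2.
  exact: suniq (suff_min alpha x s' a1 Ca).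
- move=> ->.
  have Ca := nec_min alpha x sstar j0 a1 smin.
  exact: suff_min 2 (Xs alpha x sstar) sstar r12 ((Cond_equiv alpha x sstar a1).1 Ca).
Qed.
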